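(* (1) If $a_t\in HKa_sK$ for some $s>0$, then $|t|\le s$. (2) Given any $\epsilon>0$, there exists $T_0=T_0(\epsilon)$ such that $$\{k\in K: a_tk\in HKA^+\text{ for some }t>T_0\}\subset K_\epsilon M.$$
   Context: $G=\mathrm{PSL}_2(\mathbb C)$, $K=\mathrm{PSU}(2)$, $a_t=\mathrm{diag}(e^{t/2},e^{-t/2})$, $A^+=\{a_t:t\ge0\}$, $M=\{\mathrm{diag}(e^{i\theta},e^{-i\theta}):\theta\in\mathbb R\}$, $H$ is the stabilizer in $G$ of the unit circle $C_0$ centered at $0$ (equivalently of its convex hull, the unit hemisphere in $\mathbb H^3$). A left-invariant metric on $G$ is fixed; $U_\epsilon$ is the $\epsilon$-ball around $e$ and $K_\epsilon=K\cap U_\epsilon$. *)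

(* Defs.v *)
From HB Require Import structures.
From mathcomp Require Import all_boot all_order all_algebra.
From mathcomp Require Import complex.
From mathcomp Require Import reals sequences exp trigo.
Set Implicit Arguments. Unset Strict Implicit. Unset Printing Implicit Defensive.
Import Order.TTheory GRing.Theory Num.Theory.
Local Open Scope ring_scope.

(* G = PSL_2(C) is modelled by SL_2(C): an element of PSL_2(C) is a class {g,-g}.
   All subsets of G used below (K, H, M, KaK, ...) are represented by their full
   preimages in SL_2(C), which all contain -1; hence every membership statement
   in PSL_2(C) becomes the corresponding membership statement in SL_2(C). *)

Section Defs.
Variable R : realType.
Local Notation C := R[i].
Local Notation M2 := 'M[C]_2.

Definition cabs2 (z : C) : R := (@complex.Re R z) ^+ 2 + (@complex.Im R z) ^+ 2.

Definition cconj (z : C) : C := Complex (@complex.Re R z) (- @complex.Im R z).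
Definition adjmx (g : M2) : M2 := \matrix_(i < 2, j < 2) cconj (g j i).

Definition mk2 (a b c d : C) : M2 :=
  \matrix_(i < 2, j < 2)
    if i == ord0 then (if j == ord0 then a else b) else (if j == ord0 then c else d).

Definition ent (g : M2) (i j : nat) : C := g (inord i) (inord j).

Definition SL2 (g : M2) : Prop := \det g = 1.

Definition inK (g : M2) : Prop := SL2 g /\ g *m adjmx g = 1%:M.

Definition a_ (t : R) : M2 :=
  mk2 (Complex (expR (t / 2)) 0) 0 0 (Complex (expR (- (t / 2))) 0).

Definition inM (g : M2) : Prop :=
  exists theta : R, g = mk2 (Complex (cos theta) (sin theta)) 0 0
                            (Complex (cos theta) (- sin theta)).

Definition inAplus (g : M2) : Prop := exists t : R, 0 <= t /\ g = a_ t.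

(* Moebius action on the Riemann sphere C u {oo} = option C (None = oo). *)
Definition mobius (g : M2) (w : option C) : option C :=
  let a := ent g 0 0 in let b := ent g 0 1 in
  let c := ent g 1 0 in let d := ent g 1 1 in
  match w with
  | Some z => if c * z + d == 0 then None else Some ((a * z + b) / (c * z + d))
  | None => if c == 0 then None else Some (a / c)
  end.

Definition onC0 (w : option C) : Prop :=
  exists z : C, w = Some z /\ cabs2 z = 1.

Definition inH (g : M2) : Prop :=
  SL2 g /\
  (forall w, onC0 w -> onC0 (mobius g w)) /\
  (forall w', onC0 w' -> exists w, onC0 w /\ mobius g w = w').

Definition near (delta : R) (g h : M2) : Prop :=
  forall i j : 'I_2, cabs2 (g i j - h i j) < delta ^+ 2.

(* d is (the lift to SL_2(C) of) a left-invariant metric on PSL_2(C)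
   inducing the usual (Lie group) topology. *)
Definition left_inv_metric (d : M2 -> M2 -> R) : Prop :=
  (forall g h, SL2 g -> SL2 h -> 0 <= d g h) /\
  (forall g h, SL2 g -> SL2 h -> d g h = d h g) /\
  (forall g h k, SL2 g -> SL2 h -> SL2 k -> d g k <= d g h + d h k) /\
  (forall g h, SL2 g -> SL2 h -> (d g h = 0 <-> (g = h \/ g = - h))) /\
  (forall x g h, SL2 x -> SL2 g -> SL2 h -> d (x *m g) (x *m h) = d g h) /\
  (* compatibility with the topology at the identity (hence everywhere, by
     left-invariance): metric balls about e and matrix neighbourhoods of {1,-1}
     are mutually cofinal *)
  (forall eps, 0 < eps -> exists delta, 0 < delta /\
     forall g, SL2 g -> near delta g 1%:M -> d g 1%:M < eps) /\
  (forall delta, 0 < delta -> exists eps, 0 < eps /\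
     forall g, SL2 g -> d g 1%:M < eps -> near delta g 1%:M \/ near delta g (- 1%:M)).

End Defs.

(* Main.v *)
Require Import Defs.
From HB Require Import structures.
From mathcomp Require Import all_boot all_order all_algebra.
From mathcomp Require Import complex.
From mathcomp Require Import reals sequences exp trigo.
From mathcomp Require Import ring lra.
Import Order.TTheory GRing.Theory Num.Theory.
Local Open Scope ring_scope.
Section S.
Variable R : realType.
Local Notation C := R[i].
Local Notation M2 := 'M[C]_2.
Lemma cE (a b c d : R) : (Complex a b) * (Complex c d) = Complex (a*c - b*d) (a*d + b*c) :> R[i].
Proof. by []. Qed.
Lemma cA (a b c d : R) : (Complex a b) + (Complex c d) = Complex (a+c) (b+d) :> R[i].
Proof. by []. Qed.
Lemma cN (a b : R) : - (Complex a b) = Complex (-a) (-b) :> R[i].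
Proof. by []. Qed.
Lemma c0 : 0 = Complex 0 0 :> R[i]. Proof. by []. Qed.
Lemma c1 : 1 = Complex 1 0 :> R[i]. Proof. by []. Qed.
Lemma cconjE0 (a b : R) : cconj (Complex a b) = Complex a (-b). Proof. by []. Qed.
Lemma cabs2E (a b : R) : cabs2 (Complex a b) = a^+2 + b^+2. Proof. by []. Qed.
Lemma cinj (a b c d : R) : Complex a b = Complex c d :> R[i] -> a = c /\ b = d.
Proof. by case. Qed.

Local Notation mk2 := (@mk2 R).
Local Notation adjmx := (@adjmx R).
Local Notation cconj := (@cconj R).
Local Notation cabs2 := (@cabs2 R).
Definition i0 : 'I_2 := ord0.
Definition i1 : 'I_2 := ord_max.

Lemma mk2E a b c d : (mk2 a b c d i0 i0 = a) * (mk2 a b c d i0 i1 = b)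
  * (mk2 a b c d i1 i0 = c) * (mk2 a b c d i1 i1 = d).
Proof. by rewrite !mxE. Qed.

Lemma I2 (i : 'I_2) : i = i0 \/ i = i1.
Proof. case: i => [[|[|//]] Hi]; [left|right]; exact: val_inj. Qed.

Lemma mxE2 (A : M2) : A = mk2 (A i0 i0) (A i0 i1) (A i1 i0) (A i1 i1).
Proof.
apply/matrixP => i j; rewrite !mxE.
by case: (I2 i) => ->; case: (I2 j) => ->.
Qed.

Lemma mk2_inj a b c d a' b' c' d' : mk2 a b c d = mk2 a' b' c' d' ->
  [/\ a = a', b = b', c = c' & d = d'].
Proof.
move=> E; have E' := congr1 (fun M : M2 => (M i0 i0, M i0 i1, M i1 i0, M i1 i1)) E.
by move: E'; rewrite /= !mxE /=; case.
Qed.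

Lemma mulmx2 a b c d a' b' c' d' : mk2 a b c d *m mk2 a' b' c' d' =
  mk2 (a*a' + b*c') (a*b' + b*d') (c*a' + d*c') (c*b'+d*d').
Proof.
rewrite [LHS]mxE2; congr mk2; rewrite mxE !big_ord_recr big_ord0 /= add0r !mxE //.
Qed.

Lemma adjmx2 a b c d : adjmx (mk2 a b c d) = mk2 (cconj a) (cconj c) (cconj b) (cconj d).
Proof. rewrite [LHS]mxE2 /adjmx; congr mk2; rewrite !mxE //. Qed.

Lemma det2 a b c d : \det (mk2 a b c d) = a * d - b * c.
Proof.
rewrite (expand_det_row _ ord0) !big_ord_recr big_ord0 /= add0r /cofactor !det_mx11 !mxE /=.
rewrite !expr0 !expr1 /=. ring.
Qed.

Lemma tr2 a b c d : \tr (mk2 a b c d) = a + d.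
Proof. rewrite /mxtrace !big_ord_recr big_ord0 /= add0r !mxE //. Qed.

Lemma one2 : (1%:M : M2) = mk2 1 0 0 1.
Proof. rewrite [LHS]mxE2; congr mk2; rewrite !mxE //. Qed.

Lemma cconjD x y : cconj (x + y) = cconj x + cconj y.
Proof. case: x => ? ?; case: y => ? ?; rewrite /cconj /=; congr Complex; ring. Qed.
Lemma cconjM x y : cconj (x * y) = cconj x * cconj y.
Proof. case: x => ? ?; case: y => ? ?; rewrite /cconj /=; congr Complex; ring. Qed.
Lemma cconjN x : cconj (- x) = - cconj x.
Proof. case: x => ? ?; rewrite /cconj /=; congr Complex. Qed.
Lemma cconjK x : cconj (cconj x) = x.
Proof. case: x => ? ?; rewrite /cconj /=; congr Complex; ring. Qed.
Lemma cconj0 : cconj 0 = 0.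
Proof. rewrite /cconj /=; congr Complex; ring. Qed.
Lemma cconj1 : cconj 1 = 1.
Proof. rewrite /cconj /=; congr Complex; ring. Qed.

Lemma adjmx_mul (A B : M2) : adjmx (A *m B) = adjmx B *m adjmx A.
Proof.
rewrite (mxE2 A) (mxE2 B) mulmx2 !adjmx2 mulmx2.
by congr mk2; rewrite !cconjD !cconjM; ring.
Qed.

Lemma adjmxK (A : M2) : adjmx (adjmx A) = A.
Proof. by rewrite (mxE2 A) !adjmx2 !cconjK. Qed.

Definition J : M2 := mk2 1 0 0 (-1).
Definition Q (X : M2) : M2 := adjmx X *m J *m X.

Lemma Q_mul (A B : M2) : Q (A *m B) = adjmx B *m Q A *m B.
Proof. by rewrite /Q adjmx_mul !mulmxA. Qed.

Lemma cabs2M x y : cabs2 (x * y) = cabs2 x * cabs2 y.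
Proof. case: x => ? ?; case: y => ? ?; rewrite /cabs2 /=; ring. Qed.

Lemma inord0 : inord 0 = i0. Proof. apply: val_inj; rewrite /= inordK //. Qed.
Lemma inord1 : inord 1 = i1. Proof. apply: val_inj; rewrite /= inordK //. Qed.

Lemma circle_pres (h : M2) (z : C) : inH h -> cabs2 z = 1 ->
  cabs2 (h i0 i0 * z + h i0 i1) = cabs2 (h i1 i0 * z + h i1 i1).
Proof.
case=> _ [Hf _] Hz.
have [w [Ew Hw]] := Hf (Some z) (ex_intro _ z (conj erefl Hz)).
move: Ew; rewrite /mobius /ent !inord0 !inord1.
case: eqP => // Hnz [Ew]; rewrite -Ew in Hw.
have -> : h i0 i0 * z + h i0 i1 =
   (h i0 i0 * z + h i0 i1) / (h i1 i0 * z + h i1 i1) * (h i1 i0 * z + h i1 i1).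
  by rewrite divfK //; apply/eqP.
by rewrite cabs2M Hw mul1r.
Qed.

Lemma H_form {h : M2} : inH h -> exists l : R, l ^+ 2 = 1 /\
  Q h = mk2 (Complex l 0) 0 0 (Complex (- l) 0).
Proof.
move=> Hh.
have E1 := @circle_pres h (Complex 1 0) Hh ltac:(rewrite cabs2E; ring).
have E2 := @circle_pres h (Complex (-1) 0) Hh ltac:(rewrite cabs2E; ring).
have E3 := @circle_pres h (Complex 0 1) Hh ltac:(rewrite cabs2E; ring).
have E4 := @circle_pres h (Complex 0 (-1)) Hh ltac:(rewrite cabs2E; ring).
have Hd : \det h = 1 by case: Hh.
rewrite /Q /J.
move: E1 E2 E3 E4 Hd; rewrite (mxE2 h).
rewrite !mk2E det2 !adjmx2 !mulmx2.
case: (h i0 i0) => a1 a2; case: (h i0 i1) => b1 b2;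
case: (h i1 i0) => c1 c2; case: (h i1 i1) => d1 d2.
rewrite !cE !cA !cabs2E => E1 E2 E3 E4.
move=> /(congr1 (fun z => (complex.Re z, complex.Im z))) /= [D1 D2].
exists (a1^+2 + a2^+2 - c1^+2 - c2^+2); split.
  have key : (a1^+2 + a2^+2 - c1^+2 - c2^+2) * (b1^+2 + b2^+2 - d1^+2 - d2^+2)
    - (a1*b1 + a2*b2 - c1*d1 - c2*d2)^+2 - (a1*b2 - a2*b1 - c1*d2 + c2*d1)^+2
    = - ((a1 * d1 - a2 * d2 - (b1 * c1 - b2 * c2))^+2 +
         (a1 * d2 + a2 * d1 - (b1 * c2 + b2 * c1))^+2) by ring.
  have F1 : b1^+2 + b2^+2 - d1^+2 - d2^+2 = - (a1^+2 + a2^+2 - c1^+2 - c2^+2) by nra.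
  have F2 : a1*b1 + a2*b2 - c1*d1 - c2*d2 = 0 by nra.
  have F3 : a1*b2 - a2*b1 - c1*d2 + c2*d1 = 0 by nra.
  rewrite F1 F2 F3 D1 D2 in key; nra.
rewrite /=.
congr mk2; congr Complex; nra.
Qed.

Lemma mulconj x : x * cconj x = Complex (cabs2 x) 0.
Proof. case: x => a b; rewrite /cabs2 /cconj /=; congr Complex; ring. Qed.

Lemma K_form {k : M2} : inK k -> exists a b : C,
  k = mk2 a b (- cconj b) (cconj a) /\ cabs2 a + cabs2 b = 1.
Proof.
case=> Hd Hu; move: Hd Hu; rewrite /SL2 (mxE2 k) det2 adjmx2 mulmx2 one2.
move: (k i0 i0) (k i0 i1) (k i1 i0) (k i1 i1) => a b c d.
move=> Hd /mk2_inj [R00 _ R10 _].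
have Ed : d = cconj a.
  have -> : d = cconj a + (cconj a * (a*d - b*c - 1) + b * (c * cconj a + d * cconj b)
    - d * (a * cconj a + b * cconj b - 1)) by ring.
  by rewrite Hd R00 R10; ring.
have Ec : c = - cconj b.
  have -> : c = - cconj b - (c * (a * cconj a + b * cconj b - 1) - a * (c * cconj a + d * cconj b)
    + cconj b * (a*d - b*c - 1)) by ring.
  by rewrite Hd R00 R10; ring.
exists a, b; split; first by rewrite Ed Ec.
by move: R00; rewrite !mulconj /= => -[]. 
Qed.

Lemma inK_unit {k : M2} : inK k -> k *m adjmx k = 1%:M /\ adjmx k *m k = 1%:M.
Proof. by case=> _ H; split => //; apply/mulmx1C. Qed.

Lemma part1 (t s : R) : 0 < s ->
     (exists h k1 k2 : M2, inH h /\ inK k1 /\ inK k2 /\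
        @a_ R t = h *m k1 *m @a_ R s *m k2) -> `|t| <= s.
Proof.
move=> s0 [h [k1 [k2 [Hh [Hk1 [Hk2 E]]]]]].
have [U1 U2] := inK_unit Hk2.
have E' : @a_ R t *m adjmx k2 = h *m (k1 *m @a_ R s).
  by rewrite E -mulmxA U1 mulmx1 !mulmxA.
have Tr := congr1 (fun X => \tr (Q X)) E'; move: Tr => /=.
rewrite !Q_mul adjmxK mxtrace_mulC [adjmx k2 *m _]mulmxA U2 mul1mx.
have [l [Hl ->]] := H_form Hh.
have [a [b [-> Hab]]] := K_form Hk1.
rewrite /Q /J /a_ !adjmx2 !mulmx2 !adjmx2 !mulmx2 !tr2 /cconj.
move: Hab; case: a => a1 a2; case: b => b1 b2; rewrite !cabs2E => Hab.
set P := expR (t / 2); set Pn := expR (- (t / 2)).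
set E1 := expR (s / 2); set F1 := expR (- (s / 2)).
move=> /(congr1 (@complex.Re R)) /= Ht.
have Hc : P^+2 - Pn^+2 = l * (a1^+2 + a2^+2 - b1^+2 - b2^+2) * (E1^+2 - F1^+2).
  move: Ht; lra.
set x := l * _ in Hc.
have Hx : x ^+ 2 <= 1.
  rewrite /x exprMn Hl mul1r.
  have : 0 <= a1^+2 + a2^+2 by nra.
  have : 0 <= b1^+2 + b2^+2 by nra.
  nra.
have Hx1 : x <= 1 by nra.
have Hx2 : -1 <= x by nra.
have PP : P * Pn = 1 by rewrite /P /Pn expRxMexpNx_1.
have EF : E1 * F1 = 1 by rewrite /E1 /F1 expRxMexpNx_1.
have P0 : 0 < P by exact: expR_gt0.
have Pn0 : 0 < Pn by exact: expR_gt0.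
have E0 : 0 < E1 by exact: expR_gt0.
have F0 : 0 < F1 by exact: expR_gt0.
have E1g : 1 < E1 by rewrite /E1 expR_gt1; lra.
have F1l : F1 < 1.
  have : 0 < (E1 - 1) * F1 by apply: mulr_gt0; lra.
  nra.
rewrite leNgt; apply/negP => Hts.
case: (lerP 0 t) => Ht0.
  rewrite ger0_norm // in Hts.
  have H1 : E1 < P by rewrite /E1 /P ltr_expR; lra.
  have H2 : Pn < F1 by nra.
  have H3 : F1 < E1 by lra.
  have D : 0 < E1^+2 - F1^+2 by nra.
  have H4 : x * (E1^+2 - F1^+2) <= E1^+2 - F1^+2.
    have : 0 <= (1 - x) * (E1^+2 - F1^+2) by apply: mulr_ge0; lra.
    lra.
  nra.
rewrite ltr0_norm // in Hts.
have H1 : E1 < Pn by rewrite /E1 /Pn ltr_expR; lra.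
have H2 : P < F1 by nra.
have H3 : F1 < E1 by lra.
have D : 0 < E1^+2 - F1^+2 by nra.
have H4 : - (E1^+2 - F1^+2) <= x * (E1^+2 - F1^+2).
  have : 0 <= (1 + x) * (E1^+2 - F1^+2) by apply: mulr_ge0; lra.
  lra.
nra.
Qed.

Lemma angle (co si : R) : co ^+ 2 + si ^+ 2 = 1 ->
  exists th : R, cos th = co /\ sin th = si.
Proof.
move=> H.
have Hc : co \in `[-1, 1] by rewrite in_itv /=; apply/andP; split; nra.
have Hc' : -1 <= co <= 1 by apply/andP; split; nra.
have Hs : sin (acos co) = `|si|.
  by rewrite sin_acos // -sqrtr_sqr; congr Num.sqrt; lra.
case: (lerP 0 si) => Hsi.
  by exists (acos co); rewrite acosK // Hs ger0_norm.
by exists (- acos co); rewrite cosN sinN acosK // Hs ltr0_norm // opprK.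
Qed.

Lemma est (k : M2) (t : R) (h k' : M2) (u : R) : inK k -> 0 <= t -> inH h -> inK k' -> 0 <= u ->
  @a_ R t *m k = h *m k' *m @a_ R u ->
  expR t * cabs2 (k i0 i1) <= 2.
Proof.
move=> Hk t0 Hh Hk' u0 E.
have E' := congr1 (fun X => Q X i1 i1) E; move: E' => /=.
rewrite -mulmxA [Q (h *m _)]Q_mul.
have [l [Hl ->]] := H_form Hh.
have [a [b [Ek Hab]]] := K_form Hk.
have [a' [b' [-> Hab']]] := K_form Hk'.
rewrite Ek mk2E.
rewrite /Q /J /a_; do 4 rewrite ?adjmx2 ?mulmx2; rewrite !mk2E /cconj.
clear Ek; move: Hab Hab'; case: a => a1 a2; case: b => b1 b2; case: a' => c1 c2; case: b' => d1 d2.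
rewrite !cabs2E => Hab Hab'.
set P := expR (t / 2); set Pn := expR (- (t / 2)).
set F := expR (- (u / 2)).
move=> /(congr1 (@complex.Re R)) /= Ht.
have Hc : P^+2 * (b1^+2 + b2^+2) - Pn^+2 * (a1^+2 + a2^+2) = l * (d1^+2 + d2^+2 - c1^+2 - c2^+2) * F^+2.
  move: Ht; lra.
have PP : P ^+ 2 = expR t by rewrite expr2 -expRD; congr expR; lra.
rewrite -PP.
have PPn : P * Pn = 1 by rewrite /P /Pn expRxMexpNx_1.
have P1 : 1 <= P by have := expR_ge1Dx (t / 2); rewrite -/P; lra.
have F1 : F <= 1 by rewrite /F expR_le1; lra.
have F0 : 0 < F by exact: expR_gt0.
have Pn0 : 0 < Pn by exact: expR_gt0.
have Pn1 : Pn <= 1 by nra.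
set y := l * _ in Hc.
have Hy : y ^+ 2 <= 1.
  rewrite /y exprMn Hl mul1r.
  have : 0 <= c1^+2 + c2^+2 by nra.
  have : 0 <= d1^+2 + d2^+2 by nra.
  nra.
have Hy1 : y <= 1 by nra.
have : y * F^+2 <= 1.
  have : 0 <= F ^+ 2 <= 1 by apply/andP; split; nra.
  nra.
have : Pn^+2 * (a1^+2 + a2^+2) <= 1.
  have : 0 <= Pn ^+ 2 <= 1 by apply/andP; split; nra.
  have : 0 <= a1^+2 + a2^+2 <= 1 by apply/andP; split; nra.
  nra.
nra.
Qed.

Lemma part2 (d : M2 -> M2 -> R) : left_inv_metric d ->
   forall eps : R, 0 < eps ->
   exists T0 : R,
     forall k : M2, inK k ->
       (exists t : R, T0 < t /\
          exists h k' b : M2, inH h /\ inK k' /\ inAplus b /\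
            @a_ R t *m k = h *m k' *m b) ->
       exists k1 m : M2, inK k1 /\ d k1 1%:M < eps /\ inM m /\ k = k1 *m m.
Proof.
case=> _ [_ [_ [_ [_ [Hc _]]]]] eps eps0.
have [dl [dl0 Hdl]] := Hc eps eps0.
set eta := Num.min (Num.min (dl ^+ 2) dl) (1/2).
have eta0 : 0 < eta by rewrite /eta !lt_min; apply/andP; split; [apply/andP; split|]; nra.
exists (2 / eta) => k Hk [t [Tt [h [k' [bb [Hh [Hk' [[u [u0 ->]] E]]]]]]]].
have T00 : 0 < 2 / eta by apply: divr_gt0.
have Hest := @est k t h k' u Hk (ltW (lt_trans T00 Tt)) Hh Hk' u0 E.
have [a [b [Ek Hab]]] := K_form Hk.
have Hx : cabs2 b < eta.
  move: Hest; rewrite Ek mk2E => Hest.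
  have Ht1 := expR_ge1Dx t.
  have : 2 < eta * (1 + t).
    by move: Tt; rewrite ltr_pdivrMr //; nra.
  have : 0 <= cabs2 b by rewrite /cabs2; nra.
  nra.
move: Hx; rewrite /eta !lt_min => /andP [/andP [Hx1 Hx2] Hx3].
have Hdk : \det k = 1 by case: Hk.
have [Uk _] := inK_unit Hk.
clear Hest E Hk Hh Hk' Tt T00 Hc.
move: Hab Hx1 Hx2 Hx3 Hdk Uk; rewrite Ek; clear Ek k.
case: a => a1 a2; case: b => b1 b2; rewrite !cabs2E => Hab Hx1 Hx2 Hx3 Hdk Uk.
set x := b1^+2 + b2^+2 in Hab Hx1 Hx2 Hx3.
have x0 : 0 <= x by rewrite /x; nra.
have p0 : 0 < a1^+2 + a2^+2 by lra.
pose r := Num.sqrt (a1^+2 + a2^+2).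
have r0 : 0 < r by rewrite sqrtr_gt0.
have rr : r ^+ 2 = a1^+2 + a2^+2 by rewrite sqr_sqrtr // ltW.
have rn0 : r != 0 by rewrite gt_eqF.
have [co [si [ha1 [ha2 hcs]]]] : exists co si, a1 = co * r /\ a2 = si * r /\ co^+2 + si^+2 = 1.
  exists (a1/r), (a2/r); split; first by rewrite divfK.
  split; first by rewrite divfK.
  by rewrite !expr_div_n -mulrDl -rr divff // expf_neq0.
clearbody r; subst a1 a2.
have rx : r ^+ 2 = 1 - x by move: Hab; rewrite /x; nra.
have [th [Hcos Hsin]] := @angle co si hcs.
pose m := mk2 (Complex co si) 0 0 (Complex co (- si)).
have Um : adjmx m *m m = 1%:M.
  clear -hcs; rewrite /m adjmx2 mulmx2 one2 /cconj /=; congr mk2; congr Complex; lra.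
set K := mk2 _ _ _ _ in Hdk Uk *.
have Sk1 : inK (K *m adjmx m).
  split.
    rewrite /SL2 det_mulmx Hdk mul1r /m adjmx2 det2 /cconj /=.
    rewrite c1; congr Complex; clear -hcs; lra.
  by rewrite adjmx_mul adjmxK !mulmxA -[K *m adjmx m *m m]mulmxA Um mulmx1 Uk.
have Ek1 : K *m adjmx m = mk2 (Complex r 0) (Complex b1 b2 * Complex co si)
    (- cconj (Complex b1 b2) * Complex co (- si)) (Complex r 0).
  rewrite /K /m adjmx2 mulmx2 /cconj /=; congr mk2; congr Complex; clear -hcs;
    first [ring | (transitivity (r * (co^+2 + si^+2)); [ring | by rewrite hcs mulr1])].
exists (K *m adjmx m), m; split; [exact: Sk1|split; [|split]].
- apply: Hdl; first by case: Sk1.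
  have r1 : r <= 1 by nra.
  have r2 : 1 - r <= x by nra.
  have r3 : (r - 1) ^+ 2 < dl ^+ 2 by nra.
  have bx : x < dl ^+ 2 by [].
  rewrite /near Ek1 one2 => i j.
  case: (I2 i) => ->; case: (I2 j) => ->; rewrite !mk2E /cconj /cabs2 /=;
    try lra; apply: (le_lt_trans _ bx); rewrite le_eqVlt; apply/orP; left; apply/eqP;
    (transitivity ((b1^+2+b2^+2) * (co^+2+si^+2)); [ring | by rewrite hcs mulr1]).
- by exists th; rewrite /m Hcos Hsin.
- by rewrite -mulmxA Um mulmx1.
Qed.
End S.

Theorem proposition4p2 (R : realType) :
  (* (1) a_t in H K a_s K with s > 0 implies |t| <= s *)
  (forall t s : R, 0 < s ->
     (exists h k1 k2 : 'M[R[i]]_2, inH h /\ inK k1 /\ inK k2 /\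
        a_ t = h *m k1 *m a_ s *m k2) ->
     `|t| <= s) /\
  (* (2) for any fixed left-invariant metric d, and any eps > 0, there is T0 with
     { k in K : a_t k in H K A^+ for some t > T0 } included in K_eps M *)
  (forall d : 'M[R[i]]_2 -> 'M[R[i]]_2 -> R, left_inv_metric d ->
   forall eps : R, 0 < eps ->
   exists T0 : R,
     forall k : 'M[R[i]]_2, inK k ->
       (exists t : R, T0 < t /\
          exists h k' b : 'M[R[i]]_2, inH h /\ inK k' /\ inAplus b /\
            a_ t *m k = h *m k' *m b) ->
       exists k1 m : 'M[R[i]]_2, inK k1 /\ d k1 1%:M < eps /\ inM m /\ k = k1 *m m).
Proof.
split; [move=> t s; exact: part1 | exact: (@part2 R)].
Qed.
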